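(* Let $q$ be a prime power such that $q>5$, $q\equiv 2\pmod 3$, and $q\not\equiv 0,1\pmod 5$. Then $M(q-1,\,q-5)\ge q(q-1)(q+1)$ and $M(q-2,\,q-5)\ge q(q+1)$.
   Context: For positive integers $n,d$, $M(n,d)$ denotes the maximum size of a permutation array on $n$ symbols (a non-empty subset of the symmetric group $S_n$) with Hamming distance $d$, i.e. in which any two distinct permutations differ in at least $d$ positions; the Hamming distance of $\sigma,\tau\in S_n$ is $|\{x:\sigma(x)\neq\tau(x)\}|$. *)

(* Defs.v *)
From mathcomp Require Import all_boot all_order all_fingroup.
Set Implicit Arguments. Unset Strict Implicit. Unset Printing Implicit Defensive.

Definition hdist (n : nat) (s t : {perm 'I_n}) : nat := #|[set x | s x != t x]|.

Definition is_PA (n d : nat) (A : {set {perm 'I_n}}) : bool :=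
  (A != set0) && [forall s in A, forall t in A, (s != t) ==> (d <= hdist s t)].

(* M(n,d): maximum size of a permutation array on n symbols with distance d
   (0 if there is none, which only happens when n is small relative to d). *)
Definition M (n d : nat) : nat := \max_(A : {set {perm 'I_n}} | is_PA d A) #|A|.

Definition prime_power (q : nat) : Prop := exists p k, prime p /\ 0 < k /\ q = p ^ k.

(* Main.v *)
Require Import Defs.
From mathcomp Require Import all_boot all_order all_fingroup.
Set Warnings "-notation-overridden,-ambiguous-paths".
From HB Require Import structures.
From mathcomp Require Import all_algebra all_field.
From mathcomp.algebra_tactics Require Import ring.
From mathcomp Require Import zify.
Set Implicit Arguments. Unset Strict Implicit. Unset Printing Implicit Defensive.
Import GRing.Theory.

(* Proof sketch: the double contraction (first-return map to P^1 \ {oo, 0})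
   of the Moebius group PGL(2,q) gives q(q-1)(q+1) permutations of q-1 points
   pairwise agreeing on at most 4 points; a pigeonhole step gives the second
   bound. *)

Section Mob.
Variable F : fieldType.
Local Open Scope ring_scope.

Record mat := Mat { m00 : F; m01 : F; m10 : F; m11 : F }.
Definition det (A : mat) := m00 A * m11 A - m01 A * m10 A.
Definition mmul (A B : mat) :=
  Mat (m00 A * m00 B + m01 A * m10 B) (m00 A * m01 B + m01 A * m11 B)
      (m10 A * m00 B + m11 A * m10 B) (m10 A * m01 B + m11 A * m11 B).
Definition adj (A : mat) := Mat (m11 A) (- m01 A) (- m10 A) (m00 A).

Definition nrm (x y : F) : option F := if y == 0 then None else Some (x / y).
Definition vx (p : option F) : F := if p is Some z then z else 1.
Definition vy (p : option F) : F := if p is Some z then 1 else 0.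
Definition act (A : mat) (p : option F) : option F :=
  nrm (m00 A * vx p + m01 A * vy p) (m10 A * vx p + m11 A * vy p).

Lemma nrm_scale l x y : l != 0 -> nrm (l * x) (l * y) = nrm x y.
Proof.
move=> l0; rewrite /nrm mulf_eq0 (negbTE l0) /=; have [//|y0] := eqVneq y 0.
by congr Some; rewrite invfM mulrACA mulfV // mul1r.
Qed.

Lemma vec_nrm x y : (x != 0) || (y != 0) ->
  exists2 l, l != 0 & vx (nrm x y) = l * x /\ vy (nrm x y) = l * y.
Proof.
rewrite /nrm; have [->|y0] := eqVneq y 0; rewrite /= ?eqxx ?(negbTE y0) /=.
  rewrite orbF => x0; exists x^-1; first by rewrite invr_eq0.
  by rewrite mulr0 mulVf.
move=> _; exists y^-1; first by rewrite invr_eq0.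
by rewrite mulVf // mulrC.
Qed.

Lemma vec_neq0 p : (vx p != 0) || (vy p != 0).
Proof. by case: p => [z|] /=; rewrite oner_eq0 ?orbT. Qed.

Lemma mulv_neq0 A x y : det A != 0 -> (x != 0) || (y != 0) ->
  (m00 A * x + m01 A * y != 0) || (m10 A * x + m11 A * y != 0).
Proof.
move=> dA; apply: contraTT; rewrite negb_or !negbK => /andP[/eqP e1 /eqP e2].
have ex : det A * x = 0 by rewrite /det; transitivity (m11 A * (m00 A * x + m01 A * y) - m01 A * (m10 A * x + m11 A * y)); [ring | rewrite e1 e2; ring].
have ey : det A * y = 0 by rewrite /det; transitivity (m00 A * (m10 A * x + m11 A * y) - m10 A * (m00 A * x + m01 A * y)); [ring | rewrite e1 e2; ring].
have hx : x == 0 by move/eqP: ex; rewrite mulf_eq0 (negbTE dA).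
have hy : y == 0 by move/eqP: ey; rewrite mulf_eq0 (negbTE dA).
by rewrite hx hy.
Qed.

Lemma act_mul A B p : det B != 0 -> act (mmul A B) p = act A (act B p).
Proof.
move=> dB; rewrite /act.
have := vec_nrm (mulv_neq0 dB (vec_neq0 p)).
move=> [l l0 [-> ->]].
rewrite -(nrm_scale _ _ l0) /=; congr nrm; ring.
Qed.

Lemma act_scal l p : l != 0 -> act (Mat l 0 0 l) p = p.
Proof.
move=> l0; rewrite /act /= !mul0r addr0 add0r nrm_scale //.
case: p => [z|] /=; rewrite /nrm /= ?oner_eq0 ?eqxx ?divr1 //.
Qed.

Lemma det_mul A B : det (mmul A B) = det A * det B.
Proof. rewrite /det /=; ring. Qed.

Lemma det_adj A : det (adj A) = det A.
Proof. rewrite /det /=; ring. Qed.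

Lemma actK A : det A != 0 -> cancel (act A) (act (adj A)).
Proof.
move=> dA p; rewrite -act_mul //.
have -> : mmul (adj A) A = Mat (det A) 0 0 (det A) by rewrite /mmul /det /=; congr Mat; ring.
by rewrite act_scal.
Qed.

Lemma adjK A : det A != 0 -> cancel (act (adj A)) (act A).
Proof.
move=> dA p; rewrite -act_mul ?det_adj //.
have -> : mmul A (adj A) = Mat (det A) 0 0 (det A) by rewrite /mmul /det /=; congr Mat; ring.
by rewrite act_scal.
Qed.

Lemma act_inj A : det A != 0 -> injective (act A).
Proof. by move=> dA; apply: can_inj (actK dA). Qed.

Lemma conj_ex d x : d != x ->
  exists T, [/\ det T != 0, act T None = d & act T (Some 0) = x].
Proof.
case: d => [d0|]; case: x => [x0|] // dx.
- exists (Mat d0 x0 1 1); rewrite /act /nrm /det /= ?mulr1 ?mulr0 ?addr0 ?add0r ?mul1r ?oner_eq0 ?divr1.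
  split=> //; rewrite subr_eq0; apply: contra dx => /eqP ->; by [].
- exists (Mat d0 1 1 0); rewrite /act /nrm /det /= ?mulr1 ?mulr0 ?addr0 ?add0r ?mul1r ?oner_eq0 ?eqxx ?divr1.
  by split=> //; rewrite oppr_eq0 oner_eq0.
- exists (Mat 1 x0 0 1); rewrite /act /nrm /det /= ?mulr1 ?mulr0 ?addr0 ?add0r ?mul1r ?oner_eq0 ?eqxx ?divr1.
  by split=> //; rewrite subr0 oner_eq0.
Qed.

Lemma act_upper C z : m10 C = 0 -> det C != 0 ->
  act C (Some z) = Some ((m00 C * z + m01 C) / m11 C).
Proof.
move=> c0 dC; rewrite /act /nrm /= c0 mul0r add0r !mulr1.
have [m0|//] := eqVneq (m11 C) 0.
move: dC; by rewrite /det m0 c0 !mulr0 subr0 eqxx.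
Qed.

Lemma act_None_fix C : act C None = None -> m10 C = 0.
Proof. by rewrite /act /nrm /= !mulr1 !mulr0 !addr0; case: eqP. Qed.


Section Conj.
Variables (C T : mat).
Hypotheses (dC : det C != 0) (dT : det T != 0).
Let C' := mmul (adj T) (mmul C T).
Lemma conj_det : det C' != 0.
Proof. by rewrite /C' !det_mul det_adj !mulf_neq0. Qed.
Lemma conj_act p : act C' p = act (adj T) (act C (act T p)).
Proof. by rewrite /C' !act_mul // det_mul mulf_neq0. Qed.
Lemma conj_act' p : act T (act C' p) = act C (act T p).
Proof. by rewrite conj_act adjK. Qed.
Lemma conj_iter k p : iter k (act C') p = act (adj T) (iter k (act C) (act T p)).
Proof.
elim: k p => [|k IH] p /=; first by rewrite actK.
by rewrite IH conj_act adjK.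
Qed.
End Conj.

Lemma iter_upper C k : m10 C = 0 -> det C != 0 ->
  iter k (act C) (Some 0) =
    Some (m01 C / m11 C * \sum_(i < k) (m00 C / m11 C) ^+ i).
Proof.
move=> c0 dC; have e0 : m11 C != 0.
  by apply: contraNneq dC => e0; rewrite /det e0 c0 !mulr0 subr0.
elim: k => [|k IH] /=; first by rewrite big_ord0 mulr0.
rewrite IH act_upper //.
have -> : \sum_(i < k.+1) (m00 C / m11 C) ^+ i =
   1 + (m00 C / m11 C) * \sum_(i < k) (m00 C / m11 C) ^+ i.
  rewrite big_ord_recl expr0 mulr_sumr; congr (_ + _).
  by apply: eq_bigr => i _; rewrite -exprS.
congr Some; set S := \sum_(i < k) _. field; exact: e0.
Qed.

Lemma conj_gen C d x : det C != 0 -> d != x ->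
  exists T C', [/\ det T != 0, act T None = d, act T (Some 0) = x, det C' != 0 &
    [/\ forall p, act C' p = act (adj T) (act C (act T p)),
        forall p, act T (act C' p) = act C (act T p) &
        forall k p, iter k (act C') p = act (adj T) (iter k (act C) (act T p))]].
Proof.
move=> dC dx; have [T [dT Td Tx]] := conj_ex dx.
exists T, (mmul (adj T) (mmul C T)); split=> //; first exact: conj_det.
split; [exact: conj_act | exact: conj_act' | exact: conj_iter].
Qed.

Lemma ML C d x n : det C != 0 -> n%:R != 0 :> F ->
  (forall a : F, a ^+ n = 1 -> a = 1) ->
  act C d = d -> x != d -> iter n (act C) x = x -> act C x = x.
Proof.
move=> dC n0 hn fd xd fx.
have dx : d != x by rewrite eq_sym.
have [T [C' [dT Td Tx dC' [eC eC' eI]]]] := conj_gen dC dx.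
have c0 : m10 C' = 0 by apply: act_None_fix; rewrite eC Td fd -Td actK.
have e0 : m11 C' != 0.
  by apply: contraNneq dC' => e0; rewrite /det e0 c0 !mulr0 subr0.
have hit := iter_upper n c0 dC'.
rewrite eI Tx fx -Tx actK // in hit.
case: hit => /esym/eqP; rewrite mulf_eq0 => /orP[b0|].
  rewrite -Tx -eC' act_upper // mulr0 add0r.
  by move: b0; rewrite mulf_eq0 invr_eq0 (negbTE e0) orbF => /eqP->; rewrite mul0r.
move=> /eqP S0; have /eqP : (m00 C' / m11 C') ^+ n - 1 = 0 by rewrite subrX1 S0 mulr0.
rewrite subr_eq0 => /eqP /hn a1; move: S0; rewrite a1.
under eq_bigr => i _ do rewrite expr1n.
by rewrite sumr_const card_ord => /eqP; rewrite (negbTE n0).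
Qed.

Lemma F1 C d x y : det C != 0 -> act C d = d -> act C x = x -> act C y = y ->
  d != x -> y != d -> y != x -> forall p, act C p = p.
Proof.
move=> dC fd fx fy dx yd yx.
have [T [C' [dT Td Tx dC' [eC eC' eI]]]] := conj_gen dC dx.
have c0 : m10 C' = 0 by apply: act_None_fix; rewrite eC Td fd -Td actK.
have e0 : m11 C' != 0.
  by apply: contraNneq dC' => e0; rewrite /det e0 c0 !mulr0 subr0.
have h0 : act C' (Some 0) = Some 0 by rewrite eC Tx fx -Tx actK.
rewrite act_upper // mulr0 add0r in h0; case: h0 => /eqP.
rewrite mulf_eq0 invr_eq0 (negbTE e0) orbF => /eqP b0.
have [z Ez] : exists z, act (adj T) y = Some z.
  case E: (act (adj T) y) => [z|]; first by exists z.
  by move: yd; rewrite -(adjK dT y) E Td eqxx.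
have z0 : z != 0.
  by apply: contraNneq yx => z0; rewrite -(adjK dT y) Ez z0 Tx.
have hz : act C' (Some z) = Some z by rewrite eC -Ez adjK // fy.
rewrite act_upper // b0 addr0 in hz; case: hz => /eqP.
rewrite -mulrA mulrC -mulrA -subr_eq0 -{2}[z]mulr1 -mulrBr mulf_eq0 (negbTE z0) /=.
rewrite subr_eq0 => /eqP ae.
have idC' q : act C' q = q.
  case: q => [w|]; last by rewrite /act /nrm /= c0 mul0r !mulr0 addr0 eqxx.
  rewrite act_upper // b0 addr0; congr Some.
  by rewrite -mulrA mulrC -mulrA ae mulr1.
move=> p; by rewrite -(adjK dT p) -eC' idC'.
Qed.

End Mob.


Section FR.
Variable P : finType.
Variables (x x' : P).
Definition inS z := (z == x) || (z == x').
Definition fr (k : P -> P) y :=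
  if ~~ inS (k y) then k y else if ~~ inS (k (k y)) then k (k y) else k (k (k y)).

Lemma fr1 k y : ~~ inS (k y) -> fr k y = k y.
Proof. by rewrite /fr => ->. Qed.
Lemma fr2 k y : inS (k y) -> ~~ inS (k (k y)) -> fr k y = k (k y).
Proof. by rewrite /fr => -> ->. Qed.
Lemma fr3 k y : inS (k y) -> inS (k (k y)) -> fr k y = k (k (k y)).
Proof. by rewrite /fr => -> ->. Qed.
End FR.

Section Core.
Variable P : finType.
Variables (g u h v f : P -> P) (x x' : P).
Hypotheses (gK : cancel g u) (uK : cancel u g) (hK : cancel h v) (vK : cancel v h).
Hypothesis fE : forall z, f z = u (h z).
Hypothesis xx : x != x'.
Local Notation inS := (inS x x').
Local Notation fr := (fr x x').
Hypothesis MLf : forall d z, f d = d -> ~~ inS d -> inS z ->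
  (iter 3 f z = z \/ iter 5 f z = z) -> f z = z.
Variable d : P.
Hypotheses (fd : f d = d) (Yd : ~~ inS d).
Definition inN y := [&& ~~ inS y, fr g y == fr h y & f y != y].

Lemma canE (k l : P -> P) a b : cancel k l -> k a = b -> a = l b.
Proof. by move=> K <-. Qed.

Lemma fb t : f (v t) = u t. Proof. by rewrite fE vK. Qed.

Lemma inSx : inS x. Proof. by rewrite /inS eqxx. Qed.
Lemma inSx' : inS x'. Proof. by rewrite /inS eqxx orbT. Qed.
Lemma notS z : z != x -> z != x' -> ~~ inS z.
Proof. by rewrite /inS => /negbTE-> /negbTE->. Qed.
Lemma xx2 : x' != x. Proof. by rewrite eq_sym. Qed.

Ltac neq_from H := apply: contraNneq H => E.

Lemma core1 : inN (u x) -> inN (v x) -> inN (v x') ->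
  v x' != u x -> v x' != v x -> False.
Proof.
move=> /and3P[Ya /eqP Za Na] /and3P[Yb /eqP Zb Nb] /and3P[Yb' /eqP Zb' Nb'] b'a b'b.
have ab : u x != v x by apply: contraNneq Nb => E; rewrite fb E.
have hx1 : h x != x by apply: contraNneq Yb => E; rewrite -(canE hK E) inSx.
have hx2 : h x != x' by apply: contraNneq Yb' => E; rewrite -(canE hK E) inSx.
have hx'1 : h x' != x' by apply: contraNneq Yb' => E; rewrite -(canE hK E) inSx'.
have hx'2 : h x' != x by apply: contraNneq Yb => E; rewrite -(canE hK E) inSx'.
have frhb : fr h (v x) = h x by rewrite fr2 vK ?inSx ?notS.
have frhb' : fr h (v x') = h x' by rewrite fr2 vK ?inSx' ?notS.
have ha1 : h (u x) != x by apply: contraNneq ab => E; rewrite -(canE hK E).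
have ha2 : h (u x) != x' by apply: contraNneq b'a => E; rewrite -(canE hK E).
have frha : fr h (u x) = h (u x) by rewrite fr1 ?notS.
have gb'1 : g (v x') != x by apply: contraNneq b'a => E; rewrite -(canE gK E).
have gb'2 : g (v x') != x'.
  by apply: contraNneq Nb' => E; rewrite fb -(canE gK E).
have fx' : f x' = v x' by rewrite fE -frhb' -Zb' fr1 ?notS // gK.
have gx1 : g x != x by apply: contraNneq Ya => E; rewrite -(canE gK E) inSx.
have [gx2|gx2] := eqVneq (g x) x'.
-
  have a'x : u x' = x by exact: (esym (canE gK gx2)).
  have gx'1 : g x' != x by apply: contraNneq Ya => E; rewrite -(canE gK E) inSx'.
  have gx'2 : g x' != x' by apply: contraNneq xx => E; rewrite -{1}a'x -(canE gK E).
  have frga : fr g (u x) = g x' by rewrite fr3 uK ?inSx ?gx2 ?inSx' // notS.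
  have fa : f (u x) = x' by rewrite fE -frha -Za frga gK.
  have gb1 : g (v x) != x by apply: contraNneq ab => E; rewrite -(canE gK E).
  have gb2 : g (v x) != x' by apply: contraNneq Yb => E; rewrite (canE gK E) a'x inSx.
  have fx : f x = v x by rewrite fE -frhb -Zb fr1 ?notS // gK.
  have : f x = x.
    apply: (MLf fd Yd inSx); right; by rewrite /= fx fb fa fx' fb a'x.
  by move=> E; move: Yb; rewrite -fx E inSx.
- have frga : fr g (u x) = g x by rewrite fr2 uK ?inSx // notS.
  have fa : f (u x) = x by rewrite fE -frha -Za frga gK.
  have [ba'|ba'] := eqVneq (v x) (u x').
  + have gx'1 : g x' != x by apply: contraNneq Ya => E; rewrite -(canE gK E) inSx'.
    have gx'2 : g x' != x' by apply: contraNneq Yb => E; rewrite ba' -(canE gK E) inSx'.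
    have frgb : fr g (v x) = g x' by rewrite ba' fr2 uK ?inSx' // notS.
    have fx : f x = x' by rewrite fE -frhb -Zb frgb gK.
    have : f x = x.
      apply: (MLf fd Yd inSx); right; by rewrite /= fx fx' fb -ba' fb fa.
    by move=> E; move: xx; rewrite -fx E eqxx.
  + have gb1 : g (v x) != x by apply: contraNneq ab => E; rewrite -(canE gK E).
    have gb2 : g (v x) != x' by apply: contraNneq ba' => E; rewrite (canE gK E).
    have fx : f x = v x by rewrite fE -frhb -Zb fr1 ?notS // gK.
    have : f x = x.
      apply: (MLf fd Yd inSx); left; by rewrite /= fx fb fa.
    by move=> E; move: Yb; rewrite -fx E inSx.
Qed.


Lemma core2 : inN (u x) -> inN (v x) -> inN (u x') ->
  u x' != u x -> u x' != v x -> False.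
Proof.
move=> /and3P[Ya /eqP Za Na] /and3P[Yb /eqP Zb Nb] /and3P[Ya' /eqP Za' Na'] a'a a'b.
have ab : u x != v x by apply: contraNneq Nb => E; rewrite fb E.
have a'b' : u x' != v x' by apply: contraNneq Na' => E; rewrite E fb E.
have gx1 : g x != x by apply: contraNneq Ya => E; rewrite -(canE gK E) inSx.
have gx2 : g x != x' by apply: contraNneq Ya' => E; rewrite -(canE gK E) inSx.
have frga : fr g (u x) = g x by rewrite fr2 uK ?inSx // notS.
have gx'1 : g x' != x' by apply: contraNneq Ya' => E; rewrite -(canE gK E) inSx'.
have gx'2 : g x' != x by apply: contraNneq Ya => E; rewrite -(canE gK E) inSx'.
have frga' : fr g (u x') = g x' by rewrite fr2 uK ?inSx' // notS.
have gb1 : g (v x) != x by apply: contraNneq ab => E; rewrite -(canE gK E).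
have gb2 : g (v x) != x' by apply: contraNneq a'b => E; rewrite (canE gK E).
have frgb : fr g (v x) = g (v x) by rewrite fr1 // notS.
have ha'1 : h (u x') != x by apply: contraNneq a'b => E; rewrite (canE hK E).
have ha'2 : h (u x') != x' by apply: contraNneq a'b' => E; rewrite (canE hK E).
have frha' : fr h (u x') = h (u x') by rewrite fr1 // notS.
have fa' : f (u x') = x' by rewrite fE -frha' -Za' frga' gK.
have hx1 : h x != x by apply: contraNneq Yb => E; rewrite -(canE hK E) inSx.
have [ab'|ab'] := eqVneq (u x) (v x').
- have hx'1 : h x' != x' by apply: contraNneq Ya => E; rewrite ab' -(canE hK E) inSx'.
  have hx'2 : h x' != x by apply: contraNneq Yb => E; rewrite -(canE hK E) inSx'.
  have frha : fr h (u x) = h x' by rewrite fr2 ab' vK ?inSx' // notS.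
  have fx' : f x' = x by rewrite fE -frha -Za frga gK.
  have hx2 : h x != x' by apply: contraNneq Ya => E; rewrite ab' -(canE hK E) inSx.
  have frhb : fr h (v x) = h x by rewrite fr2 vK ?inSx // notS.
  have fx : f x = v x by rewrite fE -frhb -Zb frgb gK.
  have fa : f (u x) = u x' by rewrite ab' fb.
  have : f x = x.
    apply: (MLf fd Yd inSx); right; by rewrite /= fx fb fa fa' fx'.
  by move=> E; move: Yb; rewrite -fx E inSx.
- have ha1 : h (u x) != x by apply: contraNneq ab => E; rewrite (canE hK E).
  have ha2 : h (u x) != x' by apply: contraNneq ab' => E; rewrite (canE hK E).
  have frha : fr h (u x) = h (u x) by rewrite fr1 // notS.
  have fa : f (u x) = x by rewrite fE -frha -Za frga gK.
  have [hx2|hx2] := eqVneq (h x) x'.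
  + have b'x : v x' = x by exact: (esym (canE hK hx2)).
    have hx'1 : h x' != x' by apply: contraNneq xx => E; rewrite -{1}b'x -(canE hK E).
    have hx'2 : h x' != x by apply: contraNneq Yb => E; rewrite -(canE hK E) inSx'.
    have frhb : fr h (v x) = h x' by rewrite fr3 vK ?inSx ?hx2 ?inSx' // notS.
    have fx' : f x' = v x by rewrite fE -frhb -Zb frgb gK.
    have fx : f x = u x' by rewrite fE hx2.
    have : f x = x.
      apply: (MLf fd Yd inSx); right; by rewrite /= fx fa' fx' fb fa.
    by move=> E; move: Ya'; rewrite -fx E inSx.
  + have frhb : fr h (v x) = h x by rewrite fr2 vK ?inSx // notS.
    have fx : f x = v x by rewrite fE -frhb -Zb frgb gK.
    have : f x = x.
      apply: (MLf fd Yd inSx); left; by rewrite /= fx fb fa.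
    by move=> E; move: Yb; rewrite -fx E inSx.
Qed.

End Core.

Lemma inS_sym (P : finType) (x x' z : P) : inS x' x z = inS x x' z.
Proof. by rewrite /inS orbC. Qed.
Lemma fr_sym (P : finType) (x x' : P) k y : fr x' x k y = fr x x' k y.
Proof. by rewrite /fr !(inS_sym x x'). Qed.

Lemma card2le (T : finType) (a b : T) : #|[set a; b]| <= 2.
Proof. by rewrite cards2; case: (a != b). Qed.
Lemma card4le (T : finType) (a b c e : T) : #|[set a; b; c; e]| <= 4.
Proof.
apply: leq_trans (card_size [:: a; b; c; e]).
by apply: subset_leq_card; apply/subsetP => y; rewrite !inE -!orbA.
Qed.

Section CL.
Variable P : finType.
Variables (g u h v f : P -> P) (x x' : P).
Hypotheses (gK : cancel g u) (uK : cancel u g) (hK : cancel h v) (vK : cancel v h).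
Hypothesis fE : forall z, f z = u (h z).
Hypothesis xx : x != x'.
Hypothesis MLf : forall d z, f d = d -> ~~ inS x x' d -> inS x x' z ->
  (iter 3 f z = z \/ iter 5 f z = z) -> f z = z.
Hypothesis Fix2 : forall a b c, f a = a -> f b = b -> f c = c ->
  a != b -> b != c -> c != a -> False.

Lemma CL : #|[set y | ~~ inS x x' y & fr x x' g y == fr x x' h y]| <= 4.
Proof.
set Z := [set y | _ & _]; set Fx := [set y | f y == y].
have cF : #|Fx| <= 2.
  rewrite leqNgt; apply/negP => /card_gt2P [a [b [c [[aF bF cF] [ab bc ca]]]]].
  move: aF bF cF; rewrite !inE => /eqP fa /eqP fb /eqP fc.
  exact: (Fix2 fa fb fc ab bc ca).
set N := Z :\: Fx.
have NinN y : y \in N -> inN g h f x x' y.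
  by rewrite !inE /inN => /andP[-> /andP[-> ->]].
have NA : N \subset [set u x; v x; u x'; v x'].
  apply/subsetP => y; rewrite !inE => /andP [nf /andP [Yy /eqP Zy]].
  apply: contraNT nf; rewrite !negb_or => /andP[/andP[/andP[ya yb] ya'] yb'].
  have gy : ~~ inS x x' (g y).
    by apply: notS; [apply: contraNneq ya => E; rewrite -(canE gK E) | apply: contraNneq ya' => E; rewrite -(canE gK E)].
  have hy : ~~ inS x x' (h y).
    by apply: notS; [apply: contraNneq yb => E; rewrite -(canE hK E) | apply: contraNneq yb' => E; rewrite -(canE hK E)].
  by rewrite fE -(fr1 hy) -Zy (fr1 gy) gK.
have cN : #|N| <= 4 by apply: leq_trans (subset_leq_card NA) (card4le _ _ _ _).
rewrite leqNgt; apply/negP => cZ.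
have := cardsID Fx Z; rewrite -/N => eZ.
have cZF : #|Z :&: Fx| <= 2 by apply: leq_trans (subset_leq_card (subsetIr _ _)) cF.
have N3 : 2 < #|N| by move: cZ cZF; rewrite -eZ; lia.
have /card_gt0P [d] : 0 < #|Z :&: Fx| by move: cZ cN; rewrite -eZ; lia.
rewrite !inE => /andP [/andP [Yd _] /eqP fd].
have big2 (a b : P) : a \in N -> b \in N -> exists2 w, w \in N & (w != a) && (w != b).
  move=> aN bN; have : ~~ (N \subset [set a; b]).
    apply: contraTN N3 => /subset_leq_card H; rewrite -leqNgt.
    exact: leq_trans H (card2le a b).
  by case/subsetPn => w wN; rewrite !inE negb_or => wab; exists w.
have wA w : w \in N -> [|| w == u x, w == v x, w == u x' | w == v x'].
  by move=> /(subsetP NA); rewrite !inE -!orbA.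
have MLf' : forall d z, f d = d -> ~~ inS x' x d -> inS x' x z ->
  (iter 3 f z = z \/ iter 5 f z = z) -> f z = z.
  by move=> d0 z; rewrite !(inS_sym x x'); apply: MLf.
have xx' : x' != x by rewrite eq_sym.
have NinN' y : y \in N -> inN g h f x' x y.
  by move/NinN; rewrite /inN !(inS_sym x x') !(fr_sym x x').
have Yd' : ~~ inS x' x d by rewrite (inS_sym x x').
case Hx : ((u x \in N) && (v x \in N)).
  move/andP: Hx => [aN bN]; have [w wN /andP [wa wb]] := big2 _ _ aN bN.
  move: (wA w wN); rewrite (negbTE wa) (negbTE wb) /= => /orP [] /eqP E.
  - apply: (core2 gK uK hK vK fE xx MLf fd Yd (NinN _ aN) (NinN _ bN)); rewrite -?E //.
    exact: NinN.
  - apply: (core1 gK uK hK vK fE xx MLf fd Yd (NinN _ aN) (NinN _ bN)); rewrite -?E //.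
    exact: NinN.
case Hx' : ((u x' \in N) && (v x' \in N)).
  move/andP: Hx' => [aN bN]; have [w wN /andP [wa wb]] := big2 _ _ aN bN.
  move: (wA w wN); rewrite (negbTE wa) (negbTE wb) /= orbF => /orP [] /eqP E.
  - apply: (core2 gK uK hK vK fE xx' MLf' fd Yd' (NinN' _ aN) (NinN' _ bN)); rewrite -?E //.
    exact: NinN'.
  - apply: (core1 gK uK hK vK fE xx' MLf' fd Yd' (NinN' _ aN) (NinN' _ bN)); rewrite -?E //.
    exact: NinN'.
have : N \subset [set (if u x \in N then u x else v x); (if u x' \in N then u x' else v x')].
  apply/subsetP => w wN; rewrite in_set2.
  case/or4P: (wA w wN) => /eqP E; subst w; rewrite ?wN /=.
  - by rewrite eqxx.
  - have -> : (u x \in N) = false by apply/negP => aN; move: Hx; rewrite aN wN.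
    by rewrite eqxx.
  - by rewrite eqxx orbT.
  - have -> : (u x' \in N) = false by apply/negP => aN; move: Hx'; rewrite aN wN.
    by rewrite eqxx orbT.
move/subset_leq_card => /leq_trans /(_ (card2le _ _)); lia.
Qed.
End CL.

Section FRprops.
Variable P : finType.
Variables (x x' : P) (k l : P -> P).
Hypotheses (xx : x != x') (kK : cancel k l) (lK : cancel l k).
Local Notation inS := (inS x x').
Local Notation fr := (fr x x').

Lemma inS3 a b c : inS a -> inS b -> inS c -> a != b -> c != a -> c != b -> False.
Proof.
rewrite /inS => /orP[/eqP->|/eqP->] /orP[/eqP->|/eqP->] /orP[/eqP->|/eqP->];
  by rewrite ?eqxx // eq_sym xx.
Qed.

Lemma fr_Y y : ~~ inS y -> ~~ inS (fr k y).
Proof.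
move=> Yy; rewrite /fr; case: ifPn => // /negbNE S1; case: ifPn => // /negbNE S2.
apply/negP => S3.
have kinj : injective k := can_inj kK.
have h1 : k y != k (k y).
  by apply: contraNneq Yy => /kinj E; rewrite E.
have h2 : k (k (k y)) != k y.
  by apply: contraNneq Yy => /kinj E; rewrite -E.
have h3 : k (k (k y)) != k (k y).
  by apply: contraNneq h1 => /kinj ->.
exact: (inS3 S1 S2 S3 h1 h2 h3).
Qed.

Lemma frK y : ~~ inS y -> fr l (fr k y) = y.
Proof.
move=> Yy; case: (boolP (inS (k y))) => S1; last by rewrite (fr1 S1) fr1 kK.
case: (boolP (inS (k (k y)))) => S2.
  by rewrite (fr3 S1 S2) fr3 !kK.
by rewrite (fr2 S1 S2) fr2 !kK.
Qed.

Lemma fr_inj : {in [pred y | ~~ inS y] &, injective (fr k)}.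
Proof. by move=> y1 y2 Y1 Y2 E; rewrite -(frK Y1) E frK. Qed.
End FRprops.


Lemma PA_leM n d (A : {set {perm 'I_n}}) : is_PA d A -> #|A| <= M n d.
Proof. by move=> PA; rewrite /M; apply: (leq_bigmax_cond A). Qed.

Lemma hdistE n (s t : {perm 'I_n}) : hdist s t = n - #|[set a | s a == t a]|.
Proof.
rewrite /hdist; have := cardsC [set a | s a == t a]; rewrite card_ord.
have -> : #|[set x | s x != t x]| = #|~: [set a | s a == t a]|.
  by apply: eq_card => a; rewrite !inE.
lia.
Qed.

Lemma transfer (T : finType) (Y : pred T) (I : finType) (V : pred I)
  (sig : I -> T -> T) (k : nat) :
  k < #|Y| -> 0 < #|V| ->
  (forall i, V i -> forall y, Y y -> Y (sig i y)) ->
  (forall i, V i -> {in Y &, injective (sig i)}) ->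
  (forall i j, V i -> V j -> i != j -> #|[set y | Y y & sig i y == sig j y]| <= k) ->
  #|V| <= M #|Y| (#|Y| - k).
Proof.
move=> kY V0 sY sI sA.
have [y0 y0Y] : exists y0, y0 \in Y by apply/card_gt0P; lia.
pose er : T -> 'I_#|Y| := enum_rank_in y0Y.
have erK : {in Y, cancel er enum_val} := enum_rankK_in y0Y.
have erE p p' : p \in Y -> p' \in Y -> (er p == er p') = (p == p').
  move=> pY p'Y; apply/eqP/eqP => [E|->//].
  by rewrite -(erK p pY) E erK.
pose fi i (a : 'I_#|Y|) := er (sig i (enum_val a)).
have svY i (a : 'I_#|Y|) : V i -> sig i (enum_val a) \in Y.
  by move=> Vi; exact: (sY i Vi _ (enum_valP a)).
have fiinj i : V i -> injective (fi i).
  move=> Vi a b /eqP; rewrite /fi erE ?svY // => /eqP.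
  by move/(sI i Vi _ _ (enum_valP a) (enum_valP b)) /enum_val_inj.
pose pi i : {perm 'I_#|Y|} := insubd (1%g : {perm 'I_#|Y|}) [ffun a => fi i a].
have piE i a : V i -> pi i a = fi i a.
  move=> Vi; have H : injectiveb [ffun a => fi i a].
    by apply/injectiveP => b c; rewrite !ffunE; apply: fiinj.
  have E : pval (pi i) = [ffun a => fi i a] := insubdK (1%g : {perm 'I_#|Y|}) H.
  by rewrite -pvalE E ffunE.
have agr i j : V i -> V j ->
    #|[set a | pi i a == pi j a]| = #|[set y | Y y & sig i y == sig j y]|.
  move=> Vi Vj; rewrite -(card_imset _ (@enum_val_inj _ Y)).
  apply: eq_card => y; rewrite inE; apply/imsetP/andP.
    move=> [a]; rewrite inE piE // piE // /fi erE ?svY // => E ->.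
    by split; [apply: enum_valP | ].
  move=> [yY E]; exists (er y); last by rewrite erK.
  rewrite inE !piE // /fi (erK y yY) erE //; [exact: (sY i Vi y yY) | exact: (sY j Vj y yY)].
pose A := [set pi i | i in V].
have piinj : {in V &, injective pi}.
  move=> i j Vi Vj E; apply/eqP; apply: contraT => ij.
  have := sA i j Vi Vj ij; rewrite -agr // E.
  have -> : [set a | pi j a == pi j a] = setT by apply/setP => a; rewrite !inE eqxx.
  by rewrite cardsT card_ord leqNgt kY.
have cA : #|A| = #|V| by rewrite card_in_imset.
rewrite -cA; apply: PA_leM; apply/andP; split.
  by rewrite -card_gt0 cA.
apply/forallP => s; apply/implyP => /imsetP [i Vi ->].
apply/forallP => t; apply/implyP => /imsetP [j Vj ->].
apply/implyP => pij; have ij : i != j by apply: contraNneq pij => ->.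
rewrite hdistE agr //; have := sA i j Vi Vj ij; lia.
Qed.

Lemma pigeon (T : finType) (Y : pred T) (I : finType) (V : pred I) (p : I -> T) :
  0 < #|Y| -> (forall i, V i -> Y (p i)) ->
  exists2 z0, z0 \in Y & #|V| <= #|Y| * #|[pred i | V i && (p i == z0)]|.
Proof.
move=> Y0 pY.
have eV : #|V| = \sum_(z | Y z) #|[pred i | V i && (p i == z)]|.
  rewrite -sum1_card (partition_big p Y) //=.
  by apply: eq_bigr => z _; rewrite sum1_card.
have [z0 z0Y Ez0] := eq_bigmax_cond (fun z => #|[pred i | V i && (p i == z)]|) Y0.
exists z0 => //; rewrite eV -Ez0.
rewrite -sum_nat_const; apply: leq_sum => z Yz.
exact: (leq_bigmax_cond z).
Qed.

Lemma transfer2 (T : finType) (Y : pred T) (I : finType) (V : pred I)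
  (sig : I -> T -> T) (k : nat) :
  0 < k -> k < #|Y| -> 0 < #|V| ->
  (forall i, V i -> forall y, Y y -> Y (sig i y)) ->
  (forall i, V i -> {in Y &, injective (sig i)}) ->
  (forall i j, V i -> V j -> i != j -> #|[set y | Y y & sig i y == sig j y]| <= k) ->
  #|V| <= #|Y| * M (#|Y| - 1) (#|Y| - k).
Proof.
move=> k0 kY V0 sY sI sA.
have [y0 y0Y] : exists y0, y0 \in Y by apply/card_gt0P; lia.
have [z0 z0Y cV] := pigeon (p := fun i => sig i y0) (ltn_trans k0 kY) (fun i Vi => sY i Vi y0 y0Y).
set V' := [pred i | V i && (sig i y0 == z0)] in cV.
pose Y' := [predD1 Y & y0].
have cY' : #|Y'| = #|Y| - 1 by rewrite (cardD1 y0 Y) y0Y add1n subn1.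
pose tau y := if y == z0 then y0 else if y == y0 then z0 else y.
have tauK : involutive tau.
  move=> y; rewrite /tau; case: (eqVneq y z0) => [->|yz].
    rewrite eqxx; case: (eqVneq y0 z0) => // ->; by rewrite eqxx.
  case: (eqVneq y y0) => [->|yy]; first by rewrite eqxx.
  by rewrite (negbTE yz) (negbTE yy).
have tau_inj : injective tau := inv_inj tauK.
pose sig' i y := tau (sig i y).
have sY' i : V' i -> forall y, Y' y -> Y' (sig' i y).
  move=> /andP [Vi /eqP si0] y /andP [yy0 yY] /=.
  have syY := sY i Vi y yY.
  have syz : sig i y != z0.
    by apply: contra yy0 => /eqP E; apply/eqP; apply: (sI i Vi) => //; rewrite E si0.
  rewrite /sig' /tau (negbTE syz); case: (eqVneq (sig i y) y0) => [E|E] /=.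
    by rewrite z0Y andbT; apply: contraNneq syz => zy; rewrite E zy.
  by rewrite E.
have sI' i : V' i -> {in Y' &, injective (sig' i)}.
  move=> /andP [Vi _] y y' /andP [_ yY] /andP [_ y'Y] /tau_inj.
  exact: (sI i Vi).
have sA' i j : V' i -> V' j -> i != j ->
    #|[set y | Y' y & sig' i y == sig' j y]| <= k.-1.
  move=> /andP [Vi /eqP si0] /andP [Vj /eqP sj0] ij.
  have := sA i j Vi Vj ij.
  rewrite (cardsD1 y0) inE (y0Y : Y y0) si0 sj0 eqxx /= add1n => H.
  suff S : [set y | Y' y & sig' i y == sig' j y] \subset [set y | Y y & sig i y == sig j y] :\ y0.
    by rewrite -ltnS (ltn_predK k0); exact: leq_ltn_trans (subset_leq_card S) H.
  apply/subsetP => y; rewrite !inE /sig' => /andP [/andP [yy0 yY] /eqP /tau_inj ->].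
  by rewrite yy0 (yY : Y y) eqxx.
have V'0 : 0 < #|V'| by move: V0 cV; case: #|V'|; lia.
have := transfer (k := k.-1) (Y := Y') (V := V') (sig := sig') _ V'0 sY' sI' sA'.
rewrite cY' => H; apply: leq_trans cV _; rewrite leq_mul2l.
have -> : #|Y| - k = #|Y| - 1 - k.-1 by lia.
by rewrite H ?orbT //; lia.
Qed.


Section Main.
Variable F : finFieldType.
Local Open Scope ring_scope.
Variable q : nat.
Hypothesis cardF : #|F| = q.
Hypothesis q3 : (q %% 3 = 2)%N.
Hypothesis q50 : (q %% 5 != 0)%N.
Hypothesis q51 : (q %% 5 != 1)%N.

Lemma nz_of_pow (a : F) n : a ^+ n.+1 = 1 -> a != 0.
Proof. by move=> h; apply/eqP => a0; move: h; rewrite a0 expr0n /= => /eqP; rewrite eq_sym oner_eq0. Qed.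

Lemma aq (a : F) m : (q = m * 5 + q %% 5)%N \/ (q = m * 3 + q %% 3)%N -> True.
Proof. by []. Qed.

Lemma root3 (a : F) : a ^+ 3 = 1 -> a = 1.
Proof.
move=> a3; have a0 := nz_of_pow a3.
have := expf_card a; rewrite cardF (divn_eq q 3) q3 exprD mulnC exprM a3 expr1n mul1r => a2.
by apply: (mulfI a0); rewrite mulr1 -expr2 a2.
Qed.

Lemma root5 (a : F) : a ^+ 5 = 1 -> a = 1.
Proof.
move=> a5; have a0 := nz_of_pow a5.
have := expf_card a; rewrite cardF (divn_eq q 5) exprD mulnC exprM a5 expr1n mul1r => ar.
have : (q %% 5 < 5)%N by rewrite ltn_mod.
move: q50 q51 ar; case: (q %% 5)%N => [|[|[|[|[|r]]]]] //= _ _ ar _.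
- by apply: (mulfI a0); rewrite mulr1 -expr2 ar.
- have a2 : a ^+ 2 = 1 by apply: (mulfI a0); rewrite mulr1 -exprS ar.
  by rewrite -a5 (exprS a 4) (_ : 4 = 2 * 2)%N // exprM a2 expr1n mulr1.
- have a3 : a ^+ 3 = 1 by apply: (mulfI a0); rewrite mulr1 -exprS ar.
  have a2 : a ^+ 2 = 1 by rewrite -a5 (_ : 5 = 3 + 2)%N // exprD a3 mul1r.
  by rewrite -a3 exprS a2 mulr1.
Qed.


Definition Idx := ((F * F) * {x : F | x != 0} + ({x : F | x != 0} * F))%type.
Definition matI (i : Idx) : mat F :=
  match i with
  | inl (a, d, t) => Mat a (a * d - val t) 1 d
  | inr (a, b) => Mat (val a) b 0 1
  end.

Lemma detI i : det (matI i) != 0.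
Proof.
case: i => [[[a d] [t t0]]|[[a a0] b]]; rewrite /det /=.
  by have -> : a * d - (a * d - t) * 1 = t by ring.
by have -> : a * 1 - b * 0 = a by ring.
Qed.

Lemma actL_None (a b d : F) : act (Mat a b 1 d) None = Some a.
Proof. by rewrite /act /nrm /= !mulr1 !mulr0 !addr0 oner_eq0 divr1. Qed.
Lemma actL_Some (a b d z : F) : act (Mat a b 1 d) (Some z) =
  if z + d == 0 then None else Some ((a * z + b) / (z + d)).
Proof. by rewrite /act /nrm /= !mulr1 mul1r. Qed.
Lemma actR_None (a b : F) : act (Mat a b 0 1) None = None.
Proof. by rewrite /act /nrm /= !mulr0 mul0r addr0 eqxx. Qed.
Lemma actR_Some (a b z : F) : act (Mat a b 0 1) (Some z) = Some (a * z + b).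
Proof. by rewrite /act /nrm /= !mulr1 mul0r add0r oner_eq0 divr1. Qed.

Lemma matI_inj i j : (forall p, act (matI i) p = act (matI j) p) -> i = j.
Proof.
case: i => [[[a d] [t t0]]|[[a a0] b]]; case: j => [[[a' d'] [t' t0']]|[[a' a0'] b']] /= H.
- have := H None; rewrite !actL_None => -[ea]; subst a'.
  have := H (Some (- d)); rewrite !actL_Some addNr eqxx.
  case: eqP => [E _|]; last by [].
  have ed : d' = d by move/eqP: E; rewrite addrC subr_eq0 => /eqP.
  subst d'.
  have := H (Some (1 - d)); rewrite !actL_Some subrK oner_eq0 divr1 divr1 => -[et].
  have ett : t = t'.
    apply/eqP; rewrite -subr_eq0.
    have -> : t - t' = (a * (1 - d) + (a * d - t')) - (a * (1 - d) + (a * d - t)) by ring.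
    by rewrite et subrr.
  subst t'; by rewrite (bool_irrelevance t0 t0').
- by have := H None; rewrite actL_None actR_None.
- by have := H None; rewrite actL_None actR_None.
- have := H (Some 0); rewrite !actR_Some !mulr0 !add0r => -[eb]; subst b'.
  have := H (Some 1); rewrite !actR_Some !mulr1 => -[/addIr ea]; subst a'.
  by rewrite (bool_irrelevance a0 a0').
Qed.


Hypothesis n3 : 3%:R != 0 :> F.
Hypothesis n5 : 5%:R != 0 :> F.
Hypothesis q5 : (5 < q)%N.

Definition Yp (z : option F) := ~~ inS None (Some 0) z.
Definition sigI (i : Idx) := fr None (Some 0) (act (matI i)).

Lemma agreeI i j : i != j -> (#|[set y | Yp y & sigI i y == sigI j y]| <= 4)%N.
Proof.
move=> ij.
have dI := detI i; have dJ := detI j.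
pose C := mmul (adj (matI i)) (matI j).
have dC : det C != 0 by rewrite /C det_mul det_adj mulf_neq0.
apply: (@CL _ (act (matI i)) (act (adj (matI i))) (act (matI j)) (act (adj (matI j)))
           (act C) None (Some 0)).
- exact: actK.
- exact: adjK.
- exact: actK.
- exact: adjK.
- by move=> z; rewrite /C act_mul.
- by [].
- move=> d z fd Yd Sz zd.
  have zd' : z != d by apply: contraNneq Yd => <-.
  case: zd => h; [exact: (ML dC n3 root3 fd zd' h) | exact: (ML dC n5 root5 fd zd' h)].
- move=> a b c fa fb fc ab bc ca.
  have cb : c != b by rewrite eq_sym.
  have idC := F1 dC fa fb fc ab ca cb.
  apply: (negP ij); apply/eqP; apply: matI_inj => p.
  have := congr1 (act (matI i)) (idC p); rewrite /C act_mul // adjK // => ->.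
Qed.

Lemma cardYp : #|Yp| = (q - 1)%N.
Proof.
have := cardC [pred z : option F | inS None (Some 0) z].
rewrite card_option cardF.
have -> : #|[pred z : option F | inS None (Some 0) z]| = 2%N.
  by rewrite -(card2 (None : option F) (Some 0)); apply: eq_card => z; rewrite !inE.
have -> : #|[predC [pred z : option F | inS None (Some 0) z]]| = #|Yp|.
  by apply: eq_card => z; rewrite !inE.
lia.
Qed.

Lemma cardIdx : #|{: Idx}| = (q * q * (q - 1) + (q - 1) * q)%N.
Proof.
rewrite card_sum !card_prod card_sig cardF.
have -> : #|[pred x : F | x != 0]| = (q - 1)%N.
  by rewrite -cardF subn1 -(cardC1 (0 : F)); apply: eq_card => x; rewrite !inE.
by [].
Qed.

Lemma mainM : (q * (q - 1) * (q + 1) <= M (q - 1) (q - 5))%N /\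
              (q * (q + 1) <= M (q - 2) (q - 5))%N.
Proof.
have sY i : (fun _ : Idx => true) i -> forall y, Yp y -> Yp (sigI i y).
  move=> _ y Yy; exact: (fr_Y (actK (detI i)) Yy).
have sI i : (fun _ : Idx => true) i -> {in Yp &, injective (sigI i)}.
  move=> _; exact: (fr_inj (x:=None) (x':=Some 0) (actK (detI i))).
have sA i j : (fun _ : Idx => true) i -> (fun _ : Idx => true) j -> i != j ->
    (#|[set y | Yp y & sigI i y == sigI j y]| <= 4)%N.
  by move=> _ _; apply: agreeI.
have cV : #|(fun _ : Idx => true)| = (q * (q - 1) * (q + 1))%N.
  have -> : #|(fun _ : Idx => true)| = #|{: Idx}| by apply: eq_card.
  rewrite cardIdx; have : (0 < q)%N by lia.
  case: q => [//|m] _; rewrite subn1 /=; nia.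
have k4 : (4 < #|Yp|)%N by rewrite cardYp; lia.
have V0 : (0 < #|(fun _ : Idx => true)|)%N by rewrite cV !muln_gt0; apply/andP; split; [apply/andP; split|]; lia.
have T1 := transfer k4 V0 sY sI sA.
have T2 := transfer2 (isT : (0 < 4)%N) k4 V0 sY sI sA.
rewrite cardYp cV in T1 T2.
split.
  by have -> : (q - 5 = q - 1 - 4)%N by lia.
have -> : (q - 5 = q - 1 - 4)%N by lia.
have -> : (q - 2 = q - 1 - 1)%N by lia.
rewrite -(@leq_pmul2l (q - 1)); last by lia.
by rewrite mulnCA mulnA.
Qed.

End Main.

Lemma pow_mod (p k m : nat) : prime p -> (0 < k)%N -> prime m -> (p ^ k %% m != 0)%N ->
  forall F : finFieldType, (p \in [pchar F])%R -> (m%:R != 0 :> F)%R.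
Proof.
move=> pp k0 pm hm F pF; rewrite -(dvdn_pcharf pF) (dvdn_prime2 pp pm).
apply: contra hm => /eqP ->.
by case: k k0 => // k _; rewrite expnS modnMr.
Qed.

Theorem corollary5p5 (q : nat) :
  prime_power q -> 5 < q -> q %% 3 = 2 -> q %% 5 != 0 -> q %% 5 != 1 ->
  q * (q - 1) * (q + 1) <= M (q - 1) (q - 5) /\ q * (q + 1) <= M (q - 2) (q - 5).
Proof.
move=> [p [k [pp [k0 Eq]]]] q5 q3 q50 q51.
have [F pF cF] := pPrimePowerField pp k0.
rewrite -Eq in cF.
have n3 : (3%:R != 0 :> F)%R.
  by apply: (pow_mod pp k0 (isT : prime 3)) => //; rewrite -Eq q3.
have n5 : (5%:R != 0 :> F)%R.
  by apply: (pow_mod pp k0 (isT : prime 5)) => //; rewrite -Eq.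
exact: (mainM cF q3 q50 q51 n3 n5 q5).
Qed.
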